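(* Let $X$ be an uncountable regular topological space which is open Whyburn and $\mathcal{K}$-Lindel\''{o}f. Then $X$ is a Lusin space.
   Context: A space $X$ is open Whyburn if for every open set $A\subseteq X$ and every point $x\in\overline{A}\setminus A$ there is an open set $B\subseteq A$ with $\overline{B}\setminus A=\{x\}$. $\mathcal{K}$ denotes the collection of all families $\mathcal{U}$ of open subsets of $X$ such that $X=\bigcup\{\overline{U}:U\in\mathcal{U}\}$. $X$ is $\mathcal{K}$-Lindel\''{o}f if every $\mathcal{U}\in\mathcal{K}$ has a countable subfamily belonging to $\mathcal{K}$. A Hausdorff space $X$ is a Lusin space (in the sense of Kunen) if (a) every nowhere dense subset of $X$ is countable, (b) $X$ has at most countably many isolated points, and (c) $X$ is uncountable. *)

(* Defs.v *)
From mathcomp Require Import all_boot all_order.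
From mathcomp Require Import all_classical all_reals all_analysis.
Set Implicit Arguments. Unset Strict Implicit. Unset Printing Implicit Defensive.
Local Open Scope classical_set_scope.

Definition open_whyburn (X : topologicalType) : Prop :=
  forall A : set X, open A -> forall x : X, closure A x -> ~ A x ->
    exists B : set X, [/\ open B, B `<=` A & closure B `\` A = [set x]].

Definition in_K (X : topologicalType) (U : set (set X)) : Prop :=
  (forall V, U V -> open V) /\ \bigcup_(V in U) closure V = [set: X].

Definition K_lindelof (X : topologicalType) : Prop :=
  forall U : set (set X), in_K U ->
    exists U' : set (set X), [/\ U' `<=` U, countable U' & in_K U'].

Definition nowhere_dense (X : topologicalType) (A : set X) : Prop :=
  interior (closure A) = set0.

Definition isolated_point (X : topologicalType) (x : X) : Prop :=
  open [set x].

(* Lusin space in the sense of Kunen *)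
Definition lusin_space (X : topologicalType) : Prop :=
  [/\ hausdorff_space X,
      (forall A : set X, nowhere_dense A -> countable A),
      countable [set x : X | isolated_point x]
    & ~ countable [set: X]].

(* Main.v *)
Require Import Defs.
From mathcomp Require Import all_boot all_order.
From mathcomp Require Import all_classical all_reals all_analysis.
Local Open Scope classical_set_scope.

Lemma clP {X : topologicalType} (A : set X) x :
  closure A x <-> (forall U, open U -> U x -> exists y, A y /\ U y).
Proof.
split.
  move=> cA U oU Ux; have [y [Ay Uy]] := cA U (open_nbhs_nbhs (conj oU Ux)).
  by exists y.
move=> H B; rewrite nbhsE => -[U [oU Ux] UB].
have [y [Ay Uy]] := H U oU Ux; exists y; split => //; exact: UB.
Qed.

Lemma nbhs_open {X : topologicalType} {U : set X} {x : X} : open U -> U x -> nbhs x U.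
Proof. by move=> oU Ux; apply: open_nbhs_nbhs. Qed.

Lemma regP {X : topologicalType} : regular_space X ->
  forall a (U : set X), open U -> U a -> exists V, [/\ open V, V a & closure V `<=` U].
Proof.
move=> reg a U oU Ua.
have [C Ca CU] := reg a U (nbhs_open oU Ua).
move: Ca; rewrite nbhsE => -[V [oV Va] VC].
exists V; split => //; apply: subset_trans CU; exact: closureS.
Qed.

Lemma countU {T} (A B : set T) : countable A -> countable B -> countable (A `|` B).
Proof.
move=> cA cB.
have -> : A `|` B = \bigcup_(i in [set: bool]) (if i then A else B).
  apply/seteqP; split => x.
    by case=> H; [exists true | exists false].
  by case=> -[] _ /= H; [left|right].
by apply: bigcup_countable => //; case.
Qed.

Lemma countable_sub {T} {A B : set T} : A `<=` B -> countable B -> countable A.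
Proof. by move=> AB; apply: sub_countable; exact: subset_card_le. Qed.

Lemma subsingleton_countable {T} (A : set T) :
  (forall a b, A a -> A b -> a = b) -> countable A.
Proof.
move=> H; have [[a Aa]|/set0P/negP A0] := pselect (exists a, A a).
  apply: (@countable_sub _ _ [set a]); last exact: countable1.
  by move=> b Ab; apply: H.
by move: A0; rewrite negbK => /eqP ->.
Qed.

Lemma K_count {X : topologicalType} (U : set (set X)) (S : set X) :
  K_lindelof X -> in_K U ->
  (forall V, U V -> forall a b, closure V a -> S a -> closure V b -> S b -> a = b) ->
  countable S.
Proof.
move=> KL UK Hs; have [U' [U'U cU' [_ cov]]] := KL U UK.
apply: (@countable_sub _ _ (\bigcup_(V in U') (closure V `&` S))).
  move=> x Sx; have : [set: X] x by [].
  rewrite -cov => -[V U'V cVx]; by exists V.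
apply: bigcup_countable => // V U'V; apply: subsingleton_countable.
by move=> a b [ca Sa] [cb Sb]; apply: (Hs V (U'U _ U'V)).
Qed.

Lemma T1_reg_hausdorff {X : topologicalType} :
  accessible_space X -> regular_space X -> hausdorff_space X.
Proof.
move=> acc reg p q cl; have [//|npq] := pselect (p = q); exfalso.
have c1 : closed [set q] := @accessible_closed_set1 X acc q.
have [|V [oV Vp cVU]] := regP reg p _ (closed_openC c1).
  by move=> /= pq; apply: npq.
have oW : open (~` closure V) by apply: closed_openC; exact: closed_closure.
have Wq : (~` closure V) q by move=> /cVU; apply.
have [z [Vz Wz]] := cl V _ (nbhs_open oV Vp) (nbhs_open oW Wq).
by apply: Wz; exact: subset_closure.
Qed.

Lemma closed_nd_countable {X : topologicalType} (M : set X) :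
  regular_space X -> open_whyburn X -> K_lindelof X ->
  closed M -> interior M = set0 -> countable M.
Proof.
move=> reg wh KL cM iM.
pose U := [set V : set X | open V /\
  forall a b, closure V a -> M a -> closure V b -> M b -> a = b].
apply: (@K_count X U) => //; last by move=> V [].
split; first by move=> V [].
apply/seteqP; split => // x _.
have oA : open (~` M) by exact: closed_openC.
have [Mx|nMx] := pselect (M x).
  have clA : closure (~` M) x.
    apply/clP => W oW Wx; apply: contrapT => nex.
    have WM : W `<=` M.
      move=> w Ww; apply: contrapT => nMw; apply: nex; by exists w.
    have : interior M x by apply: (filterS WM); exact: nbhs_open.
    by rewrite iM.
  have [B [oB BA BE]] := wh _ oA x clA (fun h => h Mx).
  exists B.
    split => // a b ca Ma cb Mb.
  have : (closure B `\` ~` M) a by split => // /(_ Ma).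
  have : (closure B `\` ~` M) b by split => // /(_ Mb).
    by rewrite BE => -> ->.
  have : (closure B `\` ~` M) x.
    by rewrite BE.
  by case.
have [V [oV Vx cV]] := regP reg x _ oA nMx.
exists V; last exact: subset_closure.
split => // a b /cV + Ma; by move=> /(_ Ma).
Qed.

Lemma nd_countable {X : topologicalType} (N : set X) :
  regular_space X -> open_whyburn X -> K_lindelof X ->
  nowhere_dense N -> countable N.
Proof.
move=> reg wh KL nd; apply: (@countable_sub _ _ (closure N)).
  exact: subset_closure.
by apply: closed_nd_countable => //; exact: closed_closure.
Qed.

Lemma countable_image {T U} (g : T -> U) (A : set T) :
  countable A -> countable (g @` A).
Proof. by move=> cA; apply: sub_countable cA; exact: card_image_le. Qed.

Lemma countable_inj_image {T U} {g : T -> U} {A : set T} :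
  {in A &, injective g} -> countable (g @` A) -> countable A.
Proof.
move=> ig /countable_injP [f fi]; apply/countable_injP; exists (f \o g).
move=> x y xA yA /= e; apply: ig => //; apply: fi => //; rewrite inE.
  by exists x => //; rewrite -inE.
by exists y => //; rewrite -inE.
Qed.

Definition share {T} (p q : T * T) :=
  p.1 = q.1 \/ p.1 = q.2 \/ p.2 = q.1 \/ p.2 = q.2.

Definition matching {T} (S : set T) (M : set (T * T)) :=
  (forall p, M p -> [/\ S p.1, S p.2 & p.1 <> p.2]) /\
  (forall p q, M p -> M q -> share p q -> p = q).

Lemma split_uncountable {T} (S : set T) : ~ countable S ->
  exists P, [/\ P `<=` S, ~ countable P & ~ countable (S `\` P)].
Proof.
move=> nS.
have [A [[AS Ash] Amax]] : exists A, matching S A /\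
    forall B, A `<` B -> ~ matching S B.
  apply: Zorn_bigcup => F FP Ftot; split.
    by move=> p [M FM Mp]; exact: (FP M FM).1.
  move=> p q [M FM Mp] [N FN Nq] sh.
  have [MN|NM] := Ftot M N FM FN.
    by apply: (FP N FN).2 => //; exact: MN.
  by apply: (FP M FM).2 => //; exact: NM.
pose Un := [set u | S u /\ forall p, A p -> p.1 <> u /\ p.2 <> u].
have Unsub : forall u v, Un u -> Un v -> u = v.
  move=> u v [Su Hu] [Sv Hv]; apply: contrapT => nuv.
  apply: (Amax (A `|` [set (u, v)])).
    rewrite /proper; split; first exact: subsetUl.
    move=> /(_ (u, v) (or_intror erefl)) Auv.
    by have [h _] := Hu _ Auv; apply: h.
  split.
    move=> p [Ap|->]; [exact: AS | by split].
  move=> p q [Ap|->] [Aq|->] sh.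
  - exact: Ash.
  - have [h1 h2] := Hu _ Ap; have [h3 h4] := Hv _ Ap.
    rewrite /share /= in sh; case: sh => [e|[e|[e|e]]]; exfalso;
      [exact: h1 e|exact: h3 e|exact: h2 e|exact: h4 e].
  - have [h1 h2] := Hu _ Aq; have [h3 h4] := Hv _ Aq.
    rewrite /share /= in sh; case: sh => [e|[e|[e|e]]]; exfalso;
      [exact: h1 (esym e)|exact: h2 (esym e)|exact: h3 (esym e)|exact: h4 (esym e)].
  - by [].
have i1 : {in A &, injective fst}.
  move=> p q; rewrite !inE => Ap Aq e; apply: Ash => //; by left.
have i2 : {in A &, injective snd}.
  move=> p q; rewrite !inE => Ap Aq e; apply: Ash => //; by right; right; right.
have cov : S `<=` (fst @` A) `|` (snd @` A) `|` Un.
  move=> s Ss.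
  have [[p Ap e]|np] := pselect (exists2 p, A p & (p.1 = s \/ p.2 = s)).
    by case: e => e; [left; left | left; right]; exists p.
  right; split => // p Ap; split => e; apply: np; exists p => //; by [left|right].
have cUn : countable Un by apply: subsingleton_countable.
exists (fst @` A); split.
- by move=> _ [p Ap <-]; have [] := AS p Ap.
- move=> cP; apply: nS; apply: (countable_sub cov); apply: countU => //.
  apply: countU => //; apply: countable_image.
  exact: (countable_inj_image i1).
- move=> cD; apply: nS; apply: (countable_sub cov); apply: countU => //.
  have cQ : countable (snd @` A).
    apply: (countable_sub _ cD) => _ [p Ap <-]; split; first by have [] := AS p Ap.
    move=> [q Aq e]; have pq : q = p by apply: Ash => //; right; left.
    by have [_ _ h] := AS p Ap; apply: h; rewrite -e pq.
  apply: countU => //; apply: countable_image.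
  exact: (countable_inj_image i2).
Qed.

Lemma sub_iso_open {X : topologicalType} (D : set X) :
  (forall x, D x -> open [set x]) -> open D.
Proof.
move=> H; rewrite openE => x Dx; rewrite /interior.
apply: (@filterS _ _ _ [set x]); first by move=> _ ->.
exact: nbhs_open (H x Dx) erefl.
Qed.

Lemma iso_cl {X : topologicalType} {V : set X} {a : X} :
  open [set a] -> closure V a -> V a.
Proof.
by move=> oa /clP /(_ _ oa erefl) [y [Vy <-]].
Qed.

Lemma final_step {X : topologicalType} (J : set X) :
  K_lindelof X ->
  let I := [set x : X | open [set x]] in
  J `<=` I -> (closure I `&` ~` I) `<=` closure (I `\` J) -> countable J.
Proof.
move=> KL I JI RJ.
have oI : open I by apply: sub_iso_open.
pose U := [set V : set X | open V /\
  forall a b, closure V a -> J a -> closure V b -> J b -> a = b].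
apply: (@K_count X U) => //; last by move=> V [].
split; first by move=> V [].
apply/seteqP; split => // x _.
have [Ix|nIx] := pselect (I x).
  exists [set x]; last exact: subset_closure.
  split => // a b ca Ja cb Jb.
  by rewrite (iso_cl (JI _ Ja) ca) (iso_cl (JI _ Jb) cb).
have [cx|ncx] := pselect (closure I x).
  exists (I `\` J); last exact: RJ.
  split; first by apply: sub_iso_open => y [].
  by move=> a b ca Ja; have [_ ] := iso_cl (JI _ Ja) ca.
exists (~` closure I).
  split; first by apply: closed_openC; exact: closed_closure.
  move=> a b ca Ja; have := iso_cl (JI _ Ja) ca.
  by move=> /(_ (subset_closure (JI _ Ja))).
exact: subset_closure.
Qed.

Lemma iso_countable {X : topologicalType} :
  regular_space X -> open_whyburn X -> K_lindelof X ->
  countable [set x : X | open [set x]].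
Proof.
move=> reg wh KL; set I := [set x : X | open [set x]].
have oI : open I by apply: sub_iso_open.
pose R := closure I `&` ~` I.
have cR : countable R.
  apply: closed_nd_countable => //.
    apply: closedI; [exact: closed_closure | exact: open_closedC].
  apply/seteqP; split => // x; rewrite /interior nbhsE => -[W [oW Wx] WR].
  have := (WR x Wx).1; move/clP => /(_ W oW Wx) [y [Iy Wy]].
  by have [_] := WR y Wy.
apply: contrapT => nI.
suff [J [JI nJ RJ]] : exists J, [/\ J `<=` I, ~ countable J & R `<=` closure (I `\` J)].
  by apply: nJ; exact: final_step.
have := cR; move/countable_injP => [f fi].
have [B HB] : {B : X -> set X & forall y, R y ->
    [/\ open (B y), B y `<=` I & closure (B y) `\` I = [set y]]}.
  apply: (@boolp.choice X (set X) (fun y B0 => R y -> [/\ open B0, B0 `<=` I & closure B0 `\` I = [set y]])) => y; have [[cy nIy]|nR] := pselect (R y).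
    have [B' [oB BI BE]] := wh I oI y cy nIy; by exists B'.
  by exists set0 => /nR.
pose S y := [set y' | R y' /\ (f y' < f y)%N].
pose W y := B y `\` \bigcup_(y' in S y) B y'.
have WI : forall y, R y -> W y `<=` I.
  by move=> y Ry a [Ba _]; have [_ BI _] := HB y Ry; exact: BI.
have fiR : forall y y', R y -> R y' -> f y = f y' -> y = y'.
  by move=> y y' Ry Ry' e; apply: fi => //; rewrite inE.
have Wdisj : forall y y' a, R y -> R y' -> W y a -> W y' a -> y = y'.
  move=> y y' a Ry Ry' [Ba nBa] [B'a nB'a].
  case: (ltngtP (f y) (f y')) => [lt|gt|eq]; last exact: fiR.
  - by exfalso; apply: nB'a; exists y.
  - by exfalso; apply: nBa; exists y'.
have Wcl : forall y, R y -> closure (W y) y.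
  move=> y Ry; have [oB BI BE] := HB y Ry.
  have finS : finite_set (S y).
    have fiS : {in S y &, injective f}.
      by move=> a b; rewrite !inE => -[Ra _] [Rb _]; apply: fiR.
    rewrite -(eq_finite_set (inj_card_eq fiS)).
    apply: (@sub_finite_set _ _ `I_(f y)); last exact: finite_II.
    by move=> _ [y' [_ lt] <-].
  pose C := \bigcup_(y' in S y) closure (B y').
  have cC : closed C by apply: closed_bigcup => // i _; exact: closed_closure.
  have nCy : ~ C y.
    move=> [y' [Ry' lt] cy']; have [_ _ BE'] := HB y' Ry'.
    have : (closure (B y') `\` I) y by split => //; exact: Ry.2.
    rewrite BE' => e; move: lt; by rewrite -e ltnn.
  apply/clP => U oU Uy.
  have oUC : open (U `&` ~` C) by apply: openI => //; exact: closed_openC.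
  have : closure (B y) y.
    have h : (closure (B y) `\` I) y by rewrite BE.
    exact: h.1.
  move/clP => /(_ _ oUC (conj Uy nCy)) [p [Bp [Up nCp]]].
  exists p; split => //; split => // -[y' Sy' By'p]; apply: nCp; exists y' => //.
  exact: subset_closure.
pose UW := \bigcup_(y in R) W y.
have [cE|nE] := pselect (countable (I `\` UW)); last first.
  exists (I `\` UW); split; [by move=> x [] | exact: nE | ].
  move=> y Ry; have := Wcl y Ry; apply: closureS => x Wx; split; first exact: WI Wx.
  by move=> [_]; apply; exists y.
have [y0 Ry0 nW] : exists2 y0, R y0 & ~ countable (W y0).
  apply: contrapT => h; apply: nI.
  apply: (@countable_sub _ _ ((I `\` UW) `|` UW)).
    by move=> x Ix; have [Ux|nUx] := pselect (UW x); [right|left].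
  apply: countU => //; apply: bigcup_countable => // y Ry.
  by apply: contrapT => nWy; apply: h; exists y.
have key : forall J, J `<=` W y0 -> ~ countable J -> closure (W y0 `\` J) y0 ->
    exists J, [/\ J `<=` I, ~ countable J & R `<=` closure (I `\` J)].
  move=> J JW nJ cJ; exists J; split => //.
    by move=> x /JW; exact: WI.
  move=> y Ry; have [e|ne] := pselect (y = y0).
    rewrite e; move: cJ; apply: closureS => x [Wx nJx]; split => //; exact: WI Wx.
  have := Wcl y Ry; apply: closureS => x Wx; split; first exact: WI Wx.
  by move=> /JW W0x; apply: ne; exact: (Wdisj y y0 x).
have [P [PW nP nWP]] := @split_uncountable _ (W y0) nW.
have : closure (P `|` (W y0 `\` P)) y0.
  rewrite (_ : P `|` (W y0 `\` P) = W y0); first exact: Wcl.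
  apply/seteqP; split => x; first by case => [/PW|[]].
  by move=> Wx; have [Px|nPx] := pselect (P x); [left|right].
rewrite closureU => -[cP|cWP].
  apply: (key (W y0 `\` P)); [by move=> x [] | exact: nWP | ].
  move: cP; apply: closureS => x Px; split; first exact: PW.
  by case.
apply: (key P) => //.
Qed.

Theorem lemma3p1 (X : topologicalType) :
  ~ countable [set: X] ->
  accessible_space X -> regular_space X ->
  open_whyburn X -> K_lindelof X ->
  lusin_space X.
Proof.
move=> nX acc reg wh KL; split => //.
- exact: T1_reg_hausdorff.
- by move=> A nd; exact: nd_countable.
- exact: iso_countable.
Qed.
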